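(* Fix $\epsilon>0$, a graphlet $\mathsf{G}$ on $k$ vertices, and a simple undirected graph $G$. The output $\tilde{\mathsf{G}}(G)$ of Algorithm 1 (described in the context) is an unbiased estimator of $\mathsf{G}(G)$, i.e. $\mathbb{E}[\tilde{\mathsf{G}}(G)]=\mathsf{G}(G)$.
   Context: Let $G=(V,E)$ be a simple undirected graph with $V=\{v_1,\dots,v_n\}$; user $v_i$ holds $a_i=(a_{i,1},\dots,a_{i,n})$ with $a_{i,j}=1$ iff $\{v_i,v_j\}\in E$. A graphlet is a simple graph $\mathsf{G}=(\mathsf{V},\mathsf{E})$, $\mathsf{V}=\{u_1,\dots,u_k\}$; $\mathsf{G}(G)$ is the number of distinct (not necessarily induced) subgraphs of $G$ isomorphic to $\mathsf{G}$, and $A(\mathsf{G})$ the number of automorphisms of $\mathsf{G}$. Algorithm 1: (1) every user $v_i$ reports, independently for each $j\ne i$ and independently across users, a bit $\tilde a_{i,j}$ with $\Pr[\tilde a_{i,j}=1]=e^{\epsilon}/(1+e^{\epsilon})$ if $a_{i,j}=1$ and $1/(1+e^{\epsilon})$ if $a_{i,j}=0$; (2) the server sets $\hat a_{i,j}=\frac{e^{\epsilon}+1}{e^{\epsilon}-1}\tilde a_{i,j}-\frac{1}{e^{\epsilon}-1}$; (3) with $\mathcal{D}$ the set of tuples $\mathcal{W}=(v_{\ell_1},\dots,v_{\ell_k})$ of pairwise distinct nodes, it sets $\tilde W(\mathcal{W},\mathsf{G})=\prod_{\{u_i,u_j\}\in\mathsf{E},\,i<j}\hat a_{\ell_i,\ell_j}$;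 (4) it outputs $\tilde{\mathsf{G}}(G)=\big(\sum_{\mathcal{W}\in\mathcal{D}}\tilde W(\mathcal{W},\mathsf{G})\big)/A(\mathsf{G})$. *)

(* Defs.v *)
From HB Require Import structures.
From mathcomp Require Import all_boot all_order all_algebra all_fingroup.
From mathcomp Require Import reals.
From mathcomp Require Import sequences exp.
Set Implicit Arguments. Unset Strict Implicit. Unset Printing Implicit Defensive.
Import Order.TTheory GRing.Theory Num.Theory.
Local Open Scope ring_scope.

Definition simple_graph (n : nat) (adj : rel 'I_n) : Prop :=
  (forall x y, adj x y = adj y x) /\ (forall x, adj x x = false).

Definition n_aut (k : nat) (gE : rel 'I_k) : nat :=
  #|[set s : {perm 'I_k} | [forall u, forall v, gE (s u) (s v) == gE u v]]|.

(* Subgraphs of G (vertex set S, set F of unordered edges, each an edge of G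
   with both endpoints in S) that are isomorphic to the graphlet gE. *)
Definition iso_subgraph (n k : nat) (adj : rel 'I_n) (gE : rel 'I_k)
    (SF : {set 'I_n} * {set {set 'I_n}}) : bool :=
  (SF.2 \subset [set [set x; y] | x in SF.1, y in SF.1 & adj x y]) &&
  [exists f : {ffun 'I_k -> 'I_n},
     [&& injectiveb f, f @: setT == SF.1 &
         [forall u, forall v, ([set f u; f v] \in SF.2) == gE u v]]].

Definition graphlet_count (n k : nat) (adj : rel 'I_n) (gE : rel 'I_k) : nat :=
  #|[set SF | iso_subgraph adj gE SF]|.

(* Outcome of step (1): all reported bits; omega (i,j) is tilde a_{i,j}.
   Diagonal bits are not reported; we fix them to false (probability 1). *)
Definition report (n : nat) := {ffun 'I_n * 'I_n -> bool}.

Definition rr_prob {R : realType} (eps : R) (diag a b : bool) : R :=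
  if diag then (~~ b)%:R
  else if b == a then expR eps / (1 + expR eps) else 1 / (1 + expR eps).

Definition report_prob {R : realType} (n : nat) (eps : R) (adj : rel 'I_n)
    (om : report n) : R :=
  \prod_(p : 'I_n * 'I_n) rr_prob eps (p.1 == p.2) (adj p.1 p.2) (om p).

Definition a_hat {R : realType} (n : nat) (eps : R) (om : report n)
    (i j : 'I_n) : R :=
  (expR eps + 1) / (expR eps - 1) * (om (i, j))%:R - 1 / (expR eps - 1).

Definition W_tilde {R : realType} (n k : nat) (eps : R) (gE : rel 'I_k)
    (om : report n) (l : {ffun 'I_k -> 'I_n}) : R :=
  \prod_(u : 'I_k) \prod_(v : 'I_k | (u < v)%N && gE u v)
     a_hat eps om (l u) (l v).

Definition estimator {R : realType} (n k : nat) (eps : R) (gE : rel 'I_k)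
    (om : report n) : R :=
  (\sum_(l : {ffun 'I_k -> 'I_n} | injectiveb l) W_tilde eps gE om l)
    / (n_aut gE)%:R.

Definition expected_estimate {R : realType} (n k : nat) (eps : R)
    (adj : rel 'I_n) (gE : rel 'I_k) : R :=
  \sum_(om : report n) report_prob eps adj om * estimator eps gE om.

(* Main.v *)
Require Import Defs.
From HB Require Import structures.
From mathcomp Require Import all_boot all_order all_algebra all_fingroup.
From mathcomp Require Import reals.
From mathcomp Require Import sequences exp.
From mathcomp Require Import ring.
Import Order.TTheory GRing.Theory Num.Theory.
Set Implicit Arguments. Unset Strict Implicit. Unset Printing Implicit Defensive.

Lemma set2_eq (T : finType) (a b c d : T) :
  [set a; b] = [set c; d] -> (a = c /\ b = d) \/ (a = d /\ b = c).
Proof.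
move/setP=> H.
have := H a; have := H b; have := H c; have := H d.
rewrite !inE !eqxx /= ?orbT.
move=> /orP[]/eqP Hd /orP[]/eqP Hc /esym/orP[]/eqP Hb /esym/orP[]/eqP Ha; subst;
  first [by left | by right].
Qed.

Definition Fl n k (gE : rel 'I_k) (l : {ffun 'I_k -> 'I_n}) : {set {set 'I_n}} :=
  [set [set l q.1; l q.2] | q in [set q : 'I_k * 'I_k | gE q.1 q.2]].
Definition Phi n k (gE : rel 'I_k) (l : {ffun 'I_k -> 'I_n}) :=
  (l @: setT, Fl gE l).
Definition homb n k (adj : rel 'I_n) (gE : rel 'I_k) (l : {ffun 'I_k -> 'I_n}) : bool :=
  injectiveb l && [forall u, forall v, gE u v ==> adj (l u) (l v)].

Lemma memF n k (gE : rel 'I_k) (hgE : simple_graph gE) (l : {ffun 'I_k -> 'I_n})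
  (li : injective l) u v : ([set l u; l v] \in Fl gE l) = gE u v.
Proof.
apply/imsetP/idP.
  case=> q; rewrite inE => hq /set2_eq [[/li -> /li ->]|[/li -> /li ->]] //.
  by rewrite hgE.1.
by move=> h; exists (u, v); rewrite ?inE.
Qed.

Lemma iso_of_hom n k (adj : rel 'I_n) (gE : rel 'I_k) (hgE : simple_graph gE)
  (l : {ffun 'I_k -> 'I_n}) : homb adj gE l -> iso_subgraph adj gE (Phi gE l).
Proof.
case/andP=> /injectiveP li /forallP hl.
apply/andP; split.
  apply/subsetP=> x /imsetP [q]; rewrite inE => hq ->.
  apply: imset2_f; first by apply: imset_f.
  rewrite inE /= imset_f //=.
  by have := hl q.1 => /forallP /(_ q.2) /implyP; apply.
apply/existsP; exists l; apply/and3P; split => //.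
  by apply/injectiveP.
by apply/forallP=> u; apply/forallP=> v; rewrite /= memF.
Qed.

Lemma hom_of_iso n k (adj : rel 'I_n) (gE : rel 'I_k) (hG : simple_graph adj)
  SF : iso_subgraph adj gE SF -> exists2 l, homb adj gE l & Phi gE l = SF.
Proof.
case: SF => S F /andP [/= /subsetP hsub /existsP [f /and3P [fi /eqP fS /forallP hf]]].
have fi' := injectiveP _ fi.
have hF u v : ([set f u; f v] \in F) = gE u v.
  by have /forallP /(_ v) /eqP := hf u.
exists f.
  rewrite /homb fi /=; apply/forallP=> u; apply/forallP=> v; apply/implyP=> huv.
  rewrite -hF in huv.
  have /imset2P [x y _] := hsub _ huv.
  rewrite inE /= => /andP [_ hxy] /set2_eq [[-> ->]|[-> ->]] //.
  by rewrite hG.1.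
rewrite /Phi fS; congr (_, _).
apply/setP=> x; apply/imsetP/idP.
  by case=> q; rewrite inE -hF => hq ->.
move=> hx; have /imset2P [a b ha] := hsub _ hx.
rewrite inE => /andP [hb _] ex; subst x.
move: ha hb hx; rewrite -fS => /imsetP [u _ ->] /imsetP [v _ ->] hx.
by exists (u, v); rewrite // inE /= -hF.
Qed.

Definition AutS k (gE : rel 'I_k) :=
  [set s : {perm 'I_k} | [forall u, forall v, gE (s u) (s v) == gE u v]].

Lemma fiber n k (adj : rel 'I_n) (gE : rel 'I_k) (hgE : simple_graph gE)
  (l0 : {ffun 'I_k -> 'I_n}) (h0 : homb adj gE l0) :
  [set l | homb adj gE l && (Phi gE l == Phi gE l0)] =
  [set [ffun u => l0 (s u)] | s : {perm 'I_k} in AutS gE].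
Proof.
have l0i : injective l0 by case/andP: h0 => /injectiveP.
apply/setP=> l; rewrite inE; apply/idP/imsetP.
  case/andP => hl /eqP [] hS hF.
  have li : injective l by case/andP: hl => /injectiveP.
  have ex u : exists u', l0 u' == l u.
    have : l u \in l0 @: setT by rewrite -hS imset_f.
    by case/imsetP=> u' _ ->; exists u'.
  pose sf u := xchoose (ex u).
  have sfE u : l0 (sf u) = l u by apply/eqP: (xchooseP (ex u)).
  have sfi : injective sf by move=> u v e; apply: li; rewrite -sfE e sfE.
  exists (perm sfi).
    rewrite inE; apply/forallP=> u; apply/forallP=> v; rewrite !permE.
    by rewrite -(memF hgE l0i) (sfE u) (sfE v) -hF (memF hgE li).
  by apply/ffunP=> u; rewrite ffunE permE; exact: (esym (sfE u)).
case=> s; rewrite inE => /forallP hs ->.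
have hs' u v : gE (s u) (s v) = gE u v by apply/eqP; have /forallP := hs u; apply.
apply/andP; split.
  case/andP: h0 => _ /forallP h0.
  apply/andP; split.
    by apply/injectiveP=> u v; rewrite !ffunE => /l0i /perm_inj.
  apply/forallP=> u; apply/forallP=> v; rewrite !ffunE -hs'.
  by have /forallP := h0 (s u); apply.
apply/eqP; rewrite /Phi; congr (_, _).
  apply/setP=> x; apply/imsetP/imsetP => [[u _ ->]|[u _ ->]].
    by exists (s u); rewrite ?ffunE.
  by exists ((s^-1)%g u); rewrite ?ffunE ?permKV.
apply/setP=> x; apply/imsetP/imsetP => [[q]|[q]]; rewrite inE => hq ->.
  by exists (s q.1, s q.2); rewrite ?inE ?ffunE /= ?hs'.
exists ((s^-1)%g q.1, (s^-1)%g q.2); first by rewrite inE /= -hs' !permKV.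
by rewrite !ffunE !permKV.
Qed.

Lemma count_hom n k (adj : rel 'I_n) (gE : rel 'I_k) (hgE : simple_graph gE)
  (hG : simple_graph adj) :
  #|[set l | homb adj gE l]| = (graphlet_count adj gE * n_aut gE)%N.
Proof.
rewrite -sum1dep_card (partition_big (Phi gE) (iso_subgraph adj gE)); last first.
  by move=> l; apply: iso_of_hom.
rewrite /graphlet_count -sum_nat_cond_const; apply: eq_bigr => SF hSF.
have [l0 h0 <-] := hom_of_iso hG hSF.
by rewrite sum1dep_card fiber // card_in_imset // => s t _ _ /ffunP e;
  apply/permP=> u; have := e u; rewrite !ffunE => /(injectiveP _ (proj1 (andP h0))).
Qed.

Local Open Scope ring_scope.

Lemma expect_W (R : realType) (eps : R) (heps : 0 < eps) n k (adj : rel 'I_n)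
  (gE : rel 'I_k) (l : {ffun 'I_k -> 'I_n}) (li : injective l) :
  \sum_(om : report n) report_prob eps adj om * W_tilde eps gE om l =
  \prod_(q : 'I_k * 'I_k | (q.1 < q.2)%N && gE q.1 q.2) (adj (l q.1) (l q.2))%:R.
Proof.
set e := expR eps.
have e1 : e - 1 != 0 by rewrite subr_eq0 gt_eqF // pexpR_gt1.
have e2 : 1 + e != 0 by rewrite gt_eqF // ltr_wpDl // expR_gt0.
set g := fun q : 'I_k * 'I_k => (l q.1, l q.2).
have gi : injective g by move=> [a b] [c d] [/li -> /li ->].
set A := [set q : 'I_k * 'I_k | (q.1 < q.2)%N && gE q.1 q.2].
set B := g @: A.
have EA (G : 'I_n * 'I_n -> R) :
    \prod_(q : 'I_k * 'I_k | (q.1 < q.2)%N && gE q.1 q.2) G (g q) = \prod_(p in B) G p.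
  by rewrite big_imset; [apply: eq_bigl => q; rewrite inE | move=> ? ? _ _; apply gi].
pose F (p : 'I_n * 'I_n) (b : bool) :=
  rr_prob eps (p.1 == p.2) (adj p.1 p.2) b *
  (if p \in B then (e + 1) / (e - 1) * b%:R - 1 / (e - 1) else 1).
have E1 om : report_prob eps adj om * W_tilde eps gE om l = \prod_p F p (om p).
  rewrite /W_tilde pair_big_dep /=.
  rewrite (EA (fun p => a_hat eps om p.1 p.2)) /report_prob (big_mkcond (fun p => p \in B)) -big_split.
  by apply: eq_bigr => -[a b] _ /=; rewrite /F /a_hat; case: ifP.
rewrite (eq_bigr _ (fun om _ => E1 om)) /=.
rewrite -(bigA_distr_bigA F).
rewrite (EA (fun p => (adj p.1 p.2)%:R)) (big_mkcond (fun p => p \in B)).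
apply: eq_bigr => p _; rewrite big_bool /F /=.
case: ifP => hB.
  have hd : (p.1 == p.2) = false.
    move: hB => /imsetP [q]; rewrite inE => /andP [hq _] ->; rewrite /g /=.
    by apply/negbTE/negP => /eqP /li e3; move: hq; rewrite e3 ltnn.
  rewrite hd; case: (adj p.1 p.2) => /=; rewrite /e; field; (rewrite -/e; apply/andP; split; [exact: e1 | exact: e2]).
case: (p.1 == p.2) => /=; first by rewrite !mulr1 add0r.
rewrite /rr_prob /=; case: (adj p.1 p.2) => /=; rewrite !mulr1 /e; field; rewrite -/e //.
Qed.

Theorem lemma2 (R : realType) (eps : R) (heps : 0 < eps)
    (k : nat) (gE : rel 'I_k) (hgE : simple_graph gE)
    (n : nat) (adj : rel 'I_n) (hG : simple_graph adj) :
  expected_estimate eps adj gE = (graphlet_count adj gE)%:R.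
Proof.
have hA : (n_aut gE)%:R != 0 :> R.
  rewrite pnatr_eq0 -lt0n card_gt0; apply/set0Pn; exists 1%g; rewrite inE.
  by apply/forallP=> u; apply/forallP=> v; rewrite !perm1.
rewrite /expected_estimate /estimator.
under eq_bigr do rewrite mulrA.
rewrite -mulr_suml.
under eq_bigr do rewrite mulr_sumr.
rewrite exchange_big /=.
rewrite (eq_bigr (fun l : {ffun 'I_k -> 'I_n} => \prod_(q : 'I_k * 'I_k | (q.1 < q.2)%N && gE q.1 q.2)
   (adj (l q.1) (l q.2))%:R)); last first.
  by move=> l /injectiveP li; apply: expect_W.
transitivity ((\sum_(l | homb adj gE l) 1%N)%:R / (n_aut gE)%:R : R); last first.
  by rewrite sum1dep_card count_hom // natrM mulfK.
congr (_ / _); rewrite natr_sum /homb big_mkcondr /=.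
apply: eq_bigr => l _; case: ifP => hC.
  apply: big1 => q /andP [_ hq].
  by move/forallP: hC => /(_ q.1) /forallP /(_ q.2) /implyP /(_ hq) ->.
move/negbT: hC; rewrite negb_forall => /existsP [u]; rewrite negb_forall => /existsP [v].
rewrite negb_imply => /andP [huv hna].
case: (ltngtP u v) => h.
- by rewrite (bigD1 (u, v)) /= ?h ?huv // (negbTE hna) mul0r.
- rewrite (bigD1 (v, u)) /=; last by rewrite h (hgE.1 v u) huv.
  by rewrite (hG.1 (l v)) (negbTE hna) mul0r.
- by move/val_inj: h huv => ->; rewrite hgE.2.
Qed.
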